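(* Let $\mathscr{H}$ be a complex Hilbert space and let $B,C$ be Hilbert–Schmidt operators on $\mathscr{H}$. Then $$w_{(2,e)}^2(B,C)\leq\frac12\Big(\max\{|\mathrm{tr}(B^2)|,|\mathrm{tr}(C^2)|\}+|\mathrm{tr}(BC)|+\max\{\|B\|_2^2,\|C\|_2^2\}+|\mathrm{tr}(BC^* )|\Big).$$
   Context: An operator $T$ on $\mathscr{H}$ is Hilbert–Schmidt if $\sum_i\|Te_i\|^2<\infty$ for some (equivalently every) orthonormal basis $\{e_i\}$; its Hilbert–Schmidt norm is $\|T\|_2=(\mathrm{tr}(T^*T))^{1/2}$. For an operator $T$, $\Re(T)=\frac12(T+T^* )$. The Hilbert–Schmidt Euclidean operator radius is $w_{(2,e)}(B,C)=\sup_{\lambda_1,\lambda_2\in\mathbb{C},\ |\lambda_1|^2+|\lambda_2|^2\leq1}\sup_{\theta\in\mathbb{R}}\|\Re(e^{i\theta}(\lambda_1B+\lambda_2C))\|_2$. *)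

(* Defs.v *)
From HB Require Import structures.
From mathcomp Require Import all_boot all_order all_algebra.
From mathcomp Require Import all_classical all_reals all_analysis.
From mathcomp.real_closed Require Import complex.
Set Implicit Arguments.
Unset Strict Implicit.
Unset Printing Implicit Defensive.
Import Order.TTheory GRing.Theory Num.Theory.
Local Open Scope ring_scope.
Local Open Scope classical_set_scope.

Section HilbertDefs.
Variable R : realType.
Local Notation C := R[i].

Definition cabs (z : C) : R := Normc.normc z.

Definition cexpi (th : R) : C := (cos th +i* sin th)%C.

Variable V : lmodType C.
Variable inner : V -> V -> C.

Definition hnorm (x : V) : R := Num.sqrt (complex.Re (inner x x)).

Definition is_inner_product : Prop :=
  [/\ forall (a : C) (x y z : V), inner (a *: x + y) z = a * inner x z + inner y z,
      forall x y : V, inner y x = conjc (inner x y),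
      forall x : V, 0 <= inner x x
    & forall x : V, inner x x = 0 -> x = 0].

Definition hcomplete : Prop :=
  forall u : nat -> V,
    (forall eps : R, 0 < eps -> exists N : nat, forall m n : nat,
        (N <= m)%N -> (N <= n)%N -> hnorm (u m - u n) < eps) ->
    exists l : V, forall eps : R, 0 < eps -> exists N : nat, forall n : nat,
        (N <= n)%N -> hnorm (u n - l) < eps.

Definition is_hilbert_space : Prop := is_inner_product /\ hcomplete.

Definition bounded_linear_op (T : V -> V) : Prop :=
  (forall (a : C) (x y : V), T (a *: x + y) = a *: T x + T y) /\
  exists M : R, forall x : V, hnorm (T x) <= M * hnorm x.

Definition is_adjoint (T Ts : V -> V) : Prop :=
  forall x y : V, inner (T x) y = inner x (Ts y).

Variable I : choiceType.
Variable e : I -> V.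

Definition is_orthonormal_basis : Prop :=
  [/\ forall i, inner (e i) (e i) = 1,
      forall i j, i <> j -> inner (e i) (e j) = 0
    & forall x : V, (forall i, inner x (e i) = 0) -> x = 0].

Definition hs_sum (T : V -> V) : \bar R :=
  (\esum_(i in [set: I]) ((hnorm (T (e i))) ^+ 2)%:E)%E.

Definition hilbert_schmidt (T : V -> V) : Prop :=
  bounded_linear_op T /\ (hs_sum T < +oo)%E.

(* Hilbert-Schmidt norm ||T||_2 = (tr (T^* T))^{1/2} = (sum_i ||T e_i||^2)^{1/2} *)
Definition hs_norm (T : V -> V) : R := Num.sqrt (fine (hs_sum T)).

Definition has_sum (f : I -> C) (s : C) : Prop :=
  forall eps : R, 0 < eps -> exists F0 : set I, finite_set F0 /\
    forall F : set I, finite_set F -> F0 `<=` F ->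
      cabs ((\sum_(i \in F) f i) - s) < eps.

Definition trace (T : V -> V) : C :=
  xget 0 [set s | has_sum (fun i => inner (T (e i)) (e i)) s].

Definition re_op (T Ts : V -> V) : V -> V := fun x => 2^-1 *: (T x + Ts x).

(* Hilbert-Schmidt Euclidean operator radius w_(2,e)(B,C);
   Bs, Cs are the adjoints of B, C, so that
   (e^{i th}(l1 B + l2 C))^* = e^{-i th}(conj l1 B^* + conj l2 C^* ). *)
Definition w2e (B Bs D Ds : V -> V) : R := sup
  [set r : R | exists (l1 l2 : R[i]) (th : R),
     cabs l1 ^+ 2 + cabs l2 ^+ 2 <= 1 /\
     r = hs_norm (re_op
           (fun x => cexpi th *: (l1 *: B x + l2 *: D x))
           (fun x => conjc (cexpi th) *: (conjc l1 *: Bs x + conjc l2 *: Ds x)))].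

End HilbertDefs.

(* Main.v *)
Require Import Defs.
From HB Require Import structures.
From mathcomp Require Import all_boot all_order all_algebra.
From mathcomp Require Import all_classical all_reals all_analysis.
From mathcomp.real_closed Require Import complex.
From mathcomp Require Import ring lra.
Import Order.TTheory GRing.Theory Num.Theory.

Set Implicit Arguments.
Unset Strict Implicit.
Unset Printing Implicit Defensive.
Local Open Scope ring_scope.
Local Open Scope complex_scope.
Notation CRe := complex.Re.
Notation CIm := complex.Im.

Section CX.
Variable R : realType.
Local Notation C := R[i].

Definition q (z : C) : R := Normc.normc z ^+ 2.

Lemma qE (a b : R) : q (a +i* b) = a ^+ 2 + b ^+ 2.
Proof. by rewrite /q /= sqr_sqrtr // addr_ge0 // sqr_ge0. Qed.

Lemma q_ge0 z : 0 <= q z.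
Proof. by case: z => a b; rewrite qE addr_ge0 // sqr_ge0. Qed.

Lemma mulcJ (z : C) : z * conjc z = (q z)%:C.
Proof. case: z => a b; rewrite qE /=; simpc; rewrite -complexr0; congr (_ +i* _); ring. Qed.

Lemma ReJ (z : C) : CRe (conjc z) = CRe z. Proof. by case: z => a b. Qed.
Lemma ImJ (z : C) : CIm (conjc z) = - CIm z. Proof. by case: z => a b. Qed.
Lemma qJ (z : C) : q (conjc z) = q z.
Proof. by case: z => a b; rewrite /= !qE sqrrN. Qed.

Lemma ReD (z w : C) : CRe (z + w) = CRe z + CRe w. Proof. by case: z; case: w. Qed.
Lemma ReN (z : C) : CRe (- z) = - CRe z. Proof. by case: z => a b. Qed.
Lemma ReRM (r : R) (z : C) : CRe (r%:C * z) = r * CRe z.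
Proof. by case: z => a b /=; ring. Qed.
Lemma Re_real (r : R) : CRe (r%:C) = r. Proof. by []. Qed.

Lemma normc_qE (z : C) : Normc.normc z = Num.sqrt (q z).
Proof. by rewrite /q sqrtr_sqr ger0_norm // ; case: z => a b /=; rewrite sqrtr_ge0. Qed.

Lemma Re_le_normc (z : C) : CRe z <= Normc.normc z.
Proof.
case: z => a b /=; apply: (le_trans (ler_norm a)).
rewrite -sqrtr_sqr; apply: ler_wsqrtr; rewrite lerDl sqr_ge0 //.
Qed.

Lemma sqrRe_le_q (z : C) : CRe z ^+ 2 <= q z.
Proof. by case: z => a b; rewrite qE /= lerDl sqr_ge0. Qed.

Lemma qM (z w : C) : q (z * w) = q z * q w.
Proof. by rewrite /q Normc.normcM exprMn. Qed.

Lemma qD (z w : C) : q (z + w) <= 2 * q z + 2 * q w.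
Proof.
case: z => a b; case: w => c d; rewrite /= !qE.
have h1 : 0 <= (a - c) ^+ 2 by rewrite sqr_ge0.
have h2 : 0 <= (b - d) ^+ 2 by rewrite sqr_ge0.
nra.
Qed.

Lemma normc_real (r : R) : Normc.normc (r%:C) = `|r|.
Proof. by rewrite /= expr0n addr0 sqrtr_sqr. Qed.

Lemma q_eq0 z : q z = 0 -> z = 0.
Proof.
case: z => a b; rewrite qE => h.
have ha : a ^+ 2 = 0 by apply/eqP; rewrite eq_le sqr_ge0 andbT; nra.
have hb : b ^+ 2 = 0 by apply/eqP; rewrite eq_le sqr_ge0 andbT; nra.
move/eqP: ha; rewrite sqrf_eq0 => /eqP ->; move/eqP: hb; rewrite sqrf_eq0 => /eqP ->; by [].
Qed.

End CX.


Set Implicit Arguments.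
Unset Strict Implicit.
Unset Printing Implicit Defensive.
Local Open Scope ring_scope.
Local Open Scope complex_scope.

Section IP.
Variable R : realType.
Local Notation C := R[i].
Variable V : lmodType C.
Variable inner : V -> V -> C.
Hypothesis Hip : is_inner_product inner.

Lemma ip0l z : inner 0 z = 0.
Proof.
case: Hip => H1 _ _ _.
have := H1 1 0 0 z; rewrite scale1r addr0 mul1r => h.
by apply: (addrI (inner 0 z)); rewrite addr0 -h.
Qed.

Lemma ipDl x y z : inner (x + y) z = inner x z + inner y z.
Proof. by case: Hip => H1 _ _ _; rewrite -{1}[x]scale1r H1 mul1r. Qed.

Lemma ipZl a x z : inner (a *: x) z = a * inner x z.
Proof. by case: Hip => H1 _ _ _; rewrite -[a *: x]addr0 H1 ip0l addr0. Qed.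

Lemma ipC x y : inner y x = conjc (inner x y).
Proof. by case: Hip => _ H2 _ _; rewrite H2. Qed.

Lemma ipDr x y z : inner x (y + z) = inner x y + inner x z.
Proof. by rewrite ipC ipDl rmorphD /= -!ipC. Qed.

Lemma ipZr a x z : inner x (a *: z) = conjc a * inner x z.
Proof. by rewrite ipC ipZl rmorphM /= -ipC. Qed.

Lemma ip0r z : inner z 0 = 0.
Proof. by rewrite ipC ip0l rmorph0. Qed.

Lemma ipNl x z : inner (- x) z = - inner x z.
Proof. by rewrite -scaleN1r ipZl mulN1r. Qed.

Lemma ipNr x z : inner x (- z) = - inner x z.
Proof. by rewrite -scaleN1r ipZr rmorphN rmorph1 mulN1r. Qed.

Lemma ipBl x y z : inner (x - y) z = inner x z - inner y z.
Proof. by rewrite ipDl ipNl. Qed.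

Lemma ipBr x y z : inner x (y - z) = inner x y - inner x z.
Proof. by rewrite ipDr ipNr. Qed.

Lemma ip_suml (J : Type) (s : seq J) (P : pred J) (F : J -> V) z :
  inner (\sum_(j <- s | P j) F j) z = \sum_(j <- s | P j) inner (F j) z.
Proof.
elim: s => [|j s IH]; first by rewrite !big_nil ip0l.
by rewrite !big_cons; case: (P j); rewrite ?ipDl IH.
Qed.

Lemma ip_sumr (J : Type) (s : seq J) (P : pred J) (F : J -> V) z :
  inner z (\sum_(j <- s | P j) F j) = \sum_(j <- s | P j) inner z (F j).
Proof.
elim: s => [|j s IH]; first by rewrite !big_nil ip0r.
by rewrite !big_cons; case: (P j); rewrite ?ipDr IH.
Qed.

Definition nn x := complex.Re (inner x x).

Lemma ipxx x : inner x x = (nn x)%:C.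
Proof.
case: Hip => _ _ H3 _; have := ger0_Im (H3 x); rewrite /nn.
by case: (inner x x) => a b /= ->.
Qed.

Lemma nn_ge0 x : 0 <= nn x.
Proof. by case: Hip => _ _ H3 _; have := H3 x; rewrite lecE => /andP[_]. Qed.

Lemma hnorm2 x : hnorm inner x ^+ 2 = nn x.
Proof. by rewrite /hnorm sqr_sqrtr // nn_ge0. Qed.

Lemma hnorm_ge0 x : 0 <= hnorm inner x.
Proof. by rewrite /hnorm sqrtr_ge0. Qed.

Lemma nnD x y : nn (x + y) = nn x + nn y + 2 * complex.Re (inner x y).
Proof.
rewrite /nn ipDl !ipDr [inner y x]ipC !ReD ReJ; ring.
Qed.

Lemma nnN x : nn (- x) = nn x.
Proof. by rewrite /nn ipNl ipNr opprK. Qed.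

Lemma nnB x y : nn (x - y) = nn x + nn y - 2 * complex.Re (inner x y).
Proof. by rewrite nnD nnN ipNr ReN; ring. Qed.

Lemma nnZ a x : nn (a *: x) = q a * nn x.
Proof.
by rewrite /nn ipZl ipZr mulrA mulcJ ipxx -rmorphM.
Qed.

Lemma nn_eq0 x : nn x = 0 -> x = 0.
Proof. by case: Hip => _ _ _ H4 h; apply: H4; rewrite ipxx h. Qed.

Lemma nnDle x y : nn (x + y) <= 2 * nn x + 2 * nn y.
Proof.
have := nn_ge0 (x - y); rewrite nnB nnD; lra.
Qed.

Lemma adj_sym T Ts : is_adjoint inner T Ts -> is_adjoint inner Ts T.
Proof. by move=> h x y; rewrite ipC -h -ipC. Qed.

End IP.

Set Implicit Arguments.
Unset Strict Implicit.
Unset Printing Implicit Defensive.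
Local Open Scope ring_scope.
Local Open Scope complex_scope.

Section ONB.
Variable R : realType.
Local Notation C := R[i].
Variable V : lmodType C.
Variable inner : V -> V -> C.
Hypothesis Hip : is_inner_product inner.
Variable I : choiceType.
Variable e : I -> V.
Hypothesis Hb : is_orthonormal_basis inner e.
Local Notation nn := (nn inner).

Lemma ip_e j k : inner (e j) (e k) = if j == k then 1 else 0.
Proof.
case: Hb => h1 h2 _; case: eqP => [->|/h2]; by [].
Qed.

Lemma ip_comb_e (t : seq I) (d : I -> C) k : uniq t ->
  inner (\sum_(j <- t) d j *: e j) (e k) = if k \in t then d k else 0.
Proof.
move=> ut; rewrite (ip_suml Hip).
rewrite (eq_bigr (fun j => if j == k then d k else 0)); last first.
  by move=> j _; rewrite (ipZl Hip) ip_e; case: eqP => [->|_]; rewrite ?mulr1 ?mulr0.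
rewrite -big_mkcond /= big_const_seq.
have -> : count (fun j => j == k) t = count_mem k t.
  by apply: eq_count => j.
rewrite count_uniq_mem //; case: (k \in t) => //=; by rewrite ?addr0.
Qed.

Lemma ip_x_comb x (t : seq I) (d : I -> C) :
  inner x (\sum_(j <- t) d j *: e j) = \sum_(j <- t) conjc (d j) * inner x (e j).
Proof. by rewrite (ip_sumr Hip); apply: eq_bigr => j _; rewrite ipZr. Qed.

Lemma Re_sum (J : Type) (t : seq J) (F : J -> C) :
  complex.Re (\sum_(j <- t) F j) = \sum_(j <- t) complex.Re (F j).
Proof.
elim: t => [|j t IH]; first by rewrite !big_nil.
by rewrite !big_cons ReD IH.
Qed.

Lemma nn_comb (t : seq I) (d : I -> C) : uniq t ->
  nn (\sum_(j <- t) d j *: e j) = \sum_(j <- t) q (d j).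
Proof.
move=> ut; rewrite /nn (ip_suml Hip) Re_sum big_seq [RHS]big_seq.
apply: eq_bigr => j jt; rewrite (ipZl Hip) (ipC Hip) ip_comb_e // jt mulcJ //.
Qed.

Lemma nn_sub_proj x (t : seq I) : uniq t ->
  nn (x - \sum_(j <- t) inner x (e j) *: e j) =
  nn x - \sum_(j <- t) q (inner x (e j)).
Proof.
move=> ut; rewrite (nnB Hip) nn_comb // ip_x_comb Re_sum.
have -> : \sum_(j <- t) CRe (conjc (inner x (e j)) * inner x (e j)) = \sum_(j<-t) q (inner x (e j)).
  by apply: eq_bigr => j _; rewrite mulrC mulcJ.
ring.
Qed.

Lemma bessel x (t : seq I) : uniq t ->
  \sum_(j <- t) q (inner x (e j)) <= nn x.
Proof.
move=> ut; have := nn_ge0 Hip (x - \sum_(j <- t) inner x (e j) *: e j).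
by rewrite nn_sub_proj // subr_ge0.
Qed.

Lemma cs1 x j : q (inner x (e j)) <= nn x.
Proof. by have := bessel x (t:=[:: j]) erefl; rewrite big_seq1. Qed.

End ONB.

Set Implicit Arguments.
Unset Strict Implicit.
Unset Printing Implicit Defensive.
Local Open Scope ring_scope.

Lemma inv_small (R : realType) (eps : R) : 0 < eps ->
  exists N : nat, forall n, (N <= n)%N -> (n.+1%:R)^-1 < eps.
Proof.
move=> e0; exists (Num.Def.archi_bound (eps^-1)) => n hn.
have hi : 0 <= eps^-1 by rewrite invr_ge0 ltW.
have h := archi_boundP hi.
have hn' : (Num.Def.archi_bound eps^-1)%:R <= n%:R :> R by rewrite ler_nat.
have h1 : eps^-1 < n.+1%:R by rewrite -addn1 natrD; lra.
rewrite -(invrK eps) ltf_pV2 ?posrE ?invr_gt0 // ltr0n.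
Qed.

Lemma sum_split_subset (M : zmodType) (T : eqType) (a b : seq T) (f : T -> M) :
  uniq a -> uniq b -> {subset a <= b} ->
  \sum_(j <- b) f j = \sum_(j <- a) f j + \sum_(j <- b | j \notin a) f j.
Proof.
move=> ua ub sab; rewrite (bigID (fun j => j \in a)) /=; congr (_ + _).
rewrite -big_filter; apply: perm_big; apply: uniq_perm; rewrite ?filter_uniq //.
by move=> j; rewrite mem_filter; case ja: (j \in a) => //=; rewrite sab.
Qed.

Lemma lt_from_sq (R : realFieldType) (a b : R) : 0 <= a -> 0 <= b -> a ^+ 2 < b ^+ 2 -> a < b.
Proof. move=> ha hb h; rewrite ltNge; apply/negP => hba; nra. Qed.

Set Implicit Arguments.
Unset Strict Implicit.
Unset Printing Implicit Defensive.
Local Open Scope classical_set_scope.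
Local Open Scope ring_scope.
Local Open Scope complex_scope.

Section Pars.
Variable R : realType.
Local Notation C := R[i].
Variable V : lmodType C.
Variable inner : V -> V -> C.
Hypothesis Hip : is_inner_product inner.
Hypothesis Hc : hcomplete inner.
Variable I : choiceType.
Variable e : I -> V.
Hypothesis Hb : is_orthonormal_basis inner e.
Local Notation nn := (nn inner).

Lemma sum_le_esum (f : I -> R) (t : seq I) : uniq t -> (forall j, 0 <= f j) ->
  ((\sum_(j <- t) f j)%:E <= \esum_(j in [set: I]) (f j)%:E)%E.
Proof.
move=> ut f0; apply: esum_ge; exists [set` t]; first by split => //; exact: finite_seq.
by rewrite -sumEFin fsbig_seq.
Qed.

Lemma esum_approx (f : I -> R) (s eps : R) : 0 < eps ->
  \esum_(j in [set: I]) (f j)%:E = s%:E ->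
  exists t : seq I, uniq t /\ s - eps < \sum_(j <- t) f j.
Proof.
move=> e0 hs.
have : ((s - eps)%:E < \esum_(j in [set: I]) (f j)%:E)%E by rewrite hs lte_fin; lra.
case/ereal_sup_gt => _ [X [finX _] <-].
rewrite fsbig_finite //= sumEFin lte_fin => h.
by exists (finmap.enum_fset (fset_set X)); split => //; exact: finmap.fset_uniq.
Qed.

Lemma parseval_le x :
  ((nn x)%:E <= \esum_(j in [set: I]) (q (inner x (e j)))%:E)%E.
Proof.
set c := fun j => inner x (e j).
have S0 : (0 <= \esum_(j in [set: I]) (q (c j))%:E)%E.
  by apply: esum_ge0 => j _; rewrite lee_fin q_ge0.
case Es : (\esum_(j in [set: I]) (q (c j))%:E) => [s| |]; last 2 first.
- by rewrite leey.
- by rewrite Es in S0.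
rewrite lee_fin; case: (lerP (nn x) s) => // hlt.
exfalso.
have q0 j : 0 <= q (c j) by exact: q_ge0.
have subs t : uniq t -> \sum_(j <- t) q (c j) <= s.
  by move=> ut; rewrite -lee_fin -Es; apply: sum_le_esum.
have happ n : exists t : seq I, uniq t /\ s - (n.+1%:R)^-1 < \sum_(j <- t) q (c j).
  by apply: esum_approx => //; rewrite invr_gt0 ltr0n.
have [h hh] := choice happ.
pose G n := undup (flatten [seq h k | k <- iota 0 n.+1]).
have Gu n : uniq (G n) by exact: undup_uniq.
have Gsub n m : (n <= m)%N -> {subset G n <= G m}.
  move=> nm j; rewrite !mem_undup => /flatten_mapP [k kin jk].
  apply/flatten_mapP; exists k => //; move: kin; rewrite !mem_iota !add0n => kn.
  by apply: leq_trans kn _.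
have hG n : {subset h n <= G n}.
  by move=> j jh; rewrite mem_undup; apply/flatten_mapP; exists n => //; rewrite mem_iota add0n ltnS leqnn.
pose P n := \sum_(j <- G n) q (c j).
have Plow n : s - (n.+1%:R)^-1 < P n.
  have [hu hl] := hh n; apply: (lt_le_trans hl).
  rewrite /P (sum_split_subset _ hu (Gu n) (@hG n)) lerDl.
  by apply: sumr_ge0.
have Pup n : P n <= s by apply: subs.
pose y n := \sum_(j <- G n) c j *: e j.
have Cy n m : (n <= m)%N -> nn (y m - y n) <= (n.+1%:R)^-1.
  move=> nm; rewrite /y (sum_split_subset _ (Gu n) (Gu m) (Gsub _ _ nm)) addrC addKr.
  rewrite -big_filter nn_comb ?filter_uniq // big_filter.
  have h2 := Plow n; have h1 := Pup m.
  rewrite /P (sum_split_subset _ (Gu n) (Gu m) (Gsub _ _ nm)) in h1.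
  apply: (@le_trans _ _ (s - \sum_(j <- G n) q (c j))); last by rewrite /P in h2; move: (n.+1%:R^-1) h2 => r h2; lra.
  by rewrite lerBrDl.
have Cauchy : forall eps : R, 0 < eps -> exists N : nat, forall m n : nat,
        (N <= m)%N -> (N <= n)%N -> hnorm inner (y m - y n) < eps.
  move=> eps e0; have [N hN] := inv_small (mulr_gt0 e0 e0).
  exists N => m n hm hn.
  apply: lt_from_sq; rewrite ?hnorm_ge0 ?ltW // (hnorm2 Hip).
  case: (leqP n m) => nm.
    by apply: (le_lt_trans (Cy _ _ nm)); apply: hN.
  rewrite -(nnN Hip) opprB; apply: (le_lt_trans (Cy _ _ (ltnW nm))); exact: hN.
have [l hl] := Hc Cauchy.
have orth j : inner (x - l) (e j) = 0.
  apply: q_eq0; apply/eqP; rewrite eq_le q_ge0 andbT; rewrite leNgt; apply/negP => Q0.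
  set Q := q (inner (x - l) (e j)) in Q0.
  have bnd n : Q <= 2 * (n.+1%:R)^-1 + 2 * nn (y n - l).
    rewrite /Q (_ : x - l = (x - y n) + (y n - l)); last by rewrite addrA addrNK.
    rewrite (ipDl Hip); apply: (le_trans (qD _ _)); apply: lerD; rewrite ler_pM2l //.
      rewrite (ipBl Hip) /y ip_comb_e // ?Gu //.
      case: ifP => jG; first by rewrite subrr /q Normc.normc0 expr0n /= invr_ge0 ler0n.
      rewrite subr0; have := Plow n; have := subs (j :: G n).
      rewrite /= jG Gu big_cons => /(_ isT); rewrite /P -/(c j); move: (n.+1%:R^-1) => r; lra.
    exact: cs1.
  have [N1 hN1] := inv_small (eps:=Q / 8) (ltac:(by rewrite divr_gt0)).
  pose e' := Num.min 1 (Q / 8).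
  have e'0 : 0 < e' by rewrite lt_min ltr01 divr_gt0.
  have [N2 hN2] := hl e' e'0.
  have := hN1 (maxn N1 N2) (leq_maxl _ _); have := hN2 (maxn N1 N2) (leq_maxr _ _).
  have := bnd (maxn N1 N2); rewrite -(hnorm2 Hip).
  have := hnorm_ge0 inner (y (maxn N1 N2) - l).
  have : e' <= 1 by rewrite ge_min lexx.
  have : e' <= Q / 8 by rewrite ge_min lexx orbT.
  move: (hnorm inner _) ((maxn N1 N2).+1%:R^-1) => a b.
  nra.
have xl : x = l.
  apply/eqP; rewrite -subr_eq0; apply/eqP; case: Hb => _ _ H3; exact: H3.
pose d := nn x - s.
have d0 : 0 < d by rewrite /d subr_gt0.
pose e' := Num.min 1 d.
have e'0 : 0 < e' by rewrite lt_min ltr01 d0.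
have [N hN] := hl e' e'0.
have := hN N (leqnn N).
have := nn_sub_proj Hip Hb x (Gu N).
rewrite -/(y N) -xl -(nnN Hip) opprB -(hnorm2 Hip).
have := Pup N; rewrite /P.
have := hnorm_ge0 inner (y N - x).
have : e' <= 1 by rewrite ge_min lexx.
have : e' <= d by rewrite ge_min lexx orbT.
rewrite /d.
move: (hnorm inner _) (\sum_(j <- G N) _) => a b.
nra.
Qed.

End Pars.

Set Implicit Arguments.
Unset Strict Implicit.
Unset Printing Implicit Defensive.
Local Open Scope classical_set_scope.
Local Open Scope ring_scope.
Local Open Scope complex_scope.

Section Adj.
Variable R : realType.
Local Notation C := R[i].
Variable V : lmodType C.
Variable inner : V -> V -> C.
Hypothesis Hip : is_inner_product inner.
Hypothesis Hc : hcomplete inner.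
Variable I : choiceType.
Variable e : I -> V.
Hypothesis Hb : is_orthonormal_basis inner e.
Local Notation nn := (nn inner).

Lemma hs_sumE T : hs_sum inner e T = \esum_(i in [set: I]) (nn (T (e i)))%:E.
Proof. by apply: eq_esum => i _; rewrite (hnorm2 Hip). Qed.

Lemma hs_sum_ge0 T : (0 <= hs_sum inner e T)%E.
Proof. by apply: esum_ge0 => i _; rewrite lee_fin sqr_ge0. Qed.

Lemma hs_adj_le T Ts : is_adjoint inner T Ts -> (hs_sum inner e Ts <= hs_sum inner e T)%E.
Proof.
move=> hT; rewrite !hs_sumE.
apply: ge_ereal_sup => _ [X [finX _] <-].
apply: (@le_trans _ _ (\sum_(i \in X) \esum_(j in [set: I]) (q (inner (T (e j)) (e i)))%:E)%E).
  apply: lee_fsum => // i _; apply: (le_trans (parseval_le Hip Hc Hb _)).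
  by apply: le_esum => j _; rewrite lee_fin hT (ipC Hip) qJ.
rewrite fsbig_finite //= -esum_sum; last by move=> *; rewrite lee_fin q_ge0.
apply: le_esum => j _; rewrite sumEFin lee_fin; apply: bessel => //; exact: finmap.fset_uniq.
Qed.

Lemma hs_adj_eq T Ts : is_adjoint inner T Ts -> hs_sum inner e Ts = hs_sum inner e T.
Proof.
move=> hT; apply/eqP; rewrite eq_le hs_adj_le //=; apply: hs_adj_le.
exact: adj_sym.
Qed.

End Adj.

Set Implicit Arguments.
Unset Strict Implicit.
Unset Printing Implicit Defensive.
Local Open Scope classical_set_scope.
Local Open Scope ring_scope.
Local Open Scope complex_scope.

Section HS.
Variable R : realType.
Local Notation C := R[i].
Variable I : choiceType.
Implicit Types (f g : I -> C) (a b : C).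

Lemma cabs_ge0 (z : C) : 0 <= cabs z.
Proof. by rewrite /cabs normc_qE sqrtr_ge0. Qed.

Lemma cabsB (z w : C) : cabs (z - w) = cabs (w - z).
Proof. by rewrite /cabs -normcN opprB. Qed.

Lemma cabsD (z w : C) : cabs (z + w) <= cabs z + cabs w.
Proof. exact: le_normcD. Qed.

Lemma cabsM (z w : C) : cabs (z * w) = cabs z * cabs w.
Proof. exact: Normc.normcM. Qed.

Lemma cabsJ (z : C) : cabs (conjc z) = cabs z.
Proof. by rewrite /cabs !normc_qE qJ. Qed.

Lemma cabs_eq0 (z : C) : cabs z = 0 -> z = 0.
Proof. exact: Normc.eq0_normc. Qed.

Lemma has_sum_unique f a b : has_sum f a -> has_sum f b -> a = b.
Proof.
move=> ha hb; apply/eqP; rewrite -subr_eq0; apply/eqP; apply: cabs_eq0.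
apply/eqP; rewrite eq_le cabs_ge0 andbT leNgt; apply/negP => h.
have e0 : 0 < cabs (a - b) / 4 by rewrite divr_gt0.
have [Fa [fa Ha]] := ha _ e0; have [Fb [fb Hb]] := hb _ e0.
have fU : finite_set (Fa `|` Fb) by rewrite finite_setU; split.
have := Ha _ fU (@subsetUl _ _ _); have := Hb _ fU (@subsetUr _ _ _).
set S := \sum_(i \in _) f i => h1 h2.
have : cabs (a - b) <= cabs (S - b) + cabs (a - S).
  by rewrite -(subrKA S) addrC cabsD.
rewrite [cabs (a - S)]cabsB; lra.
Qed.

Lemma has_sum_ext f g a : (forall i, f i = g i) -> has_sum f a -> has_sum g a.
Proof. by move=> h; rewrite (boolp.funext h). Qed.

Lemma has_sumD f g a b : has_sum f a -> has_sum g b ->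
  has_sum (fun i => f i + g i) (a + b).
Proof.
move=> ha hb eps e0; have e2 : 0 < eps / 2 by rewrite divr_gt0.
have [Fa [fa Ha]] := ha _ e2; have [Fb [fb Hb]] := hb _ e2.
exists (Fa `|` Fb); split; first by rewrite finite_setU; split.
move=> F fF; rewrite subUset => -[sa sb].
rewrite fsbig_split //.
have := Ha _ fF sa; have := Hb _ fF sb.
set Sa := \sum_(i \in F) f i; set Sb := \sum_(i \in F) g i => h1 h2.
have : cabs (Sa + Sb - (a + b)) <= cabs (Sa - a) + cabs (Sb - b).
  by rewrite (_ : Sa + Sb - (a + b) = (Sa - a) + (Sb - b)) ?cabsD //; ring.
lra.
Qed.

Lemma fsum_mull (k : C) f (F : set I) : finite_set F ->
  \sum_(i \in F) k * f i = k * \sum_(i \in F) f i.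
Proof. by move=> fF; rewrite !fsbig_finite // mulr_sumr. Qed.

Lemma has_sumZ (k : C) f a : has_sum f a -> has_sum (fun i => k * f i) (k * a).
Proof.
move=> ha eps e0.
have k0 : 0 < cabs k + 1 by have := cabs_ge0 k; lra.
have e2 : 0 < eps / (cabs k + 1) by rewrite divr_gt0.
have [F0 [f0 H0]] := ha _ e2; exists F0; split => // F fF sF.
rewrite fsum_mull // -mulrBr cabsM.
have hlt := H0 _ fF sF; have hx := cabs_ge0 k; have hy := cabs_ge0 (\sum_(i \in F) f i - a).
move: hlt hx hy; set y := cabs (_ - a); set x := cabs k => hlt hx hy.
have : y * (x + 1) < eps by rewrite -ltr_pdivlMr.
nra.
Qed.

Lemma has_sumN f a : has_sum f a -> has_sum (fun i => - f i) (- a).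
Proof.
move=> /(has_sumZ (-1)); rewrite mulN1r; apply: has_sum_ext => i; by rewrite mulN1r.
Qed.

Lemma has_sumJ f a : has_sum f a -> has_sum (fun i => conjc (f i)) (conjc a).
Proof.
move=> ha eps e0; have [F0 [f0 H0]] := ha _ e0; exists F0; split => // F fF sF.
have -> : \sum_(i \in F) conjc (f i) = conjc (\sum_(i \in F) f i).
  by rewrite !fsbig_finite // rmorph_sum.
by rewrite -rmorphB cabsJ; apply: H0.
Qed.

Lemma fsum_realC (g : I -> R) (F : set I) : finite_set F ->
  \sum_(i \in F) (g i)%:C = (\sum_(i \in F) g i)%:C.
Proof. by move=> fF; rewrite !fsbig_finite // rmorph_sum. Qed.

Lemma has_sum_esum (g : I -> R) (t : R) : (forall i, 0 <= g i) ->
  \esum_(i in [set: I]) (g i)%:E = t%:E -> has_sum (fun i => (g i)%:C) t%:C.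
Proof.
move=> g0 ht eps e0.
have : ((t - eps)%:E < \esum_(i in [set: I]) (g i)%:E)%E by rewrite ht lte_fin; lra.
case/ereal_sup_gt => _ [X [finX _] <-]; rewrite fsumEFin // lte_fin => hX.
exists X; split => // F fF sF.
rewrite fsum_realC // -rmorphB /cabs normc_real.
have hle : ((\sum_(i \in F) g i)%:E <= t%:E)%E.
  rewrite -ht -fsumEFin //; apply: esum_ge; exists F => //.
have hXF : \sum_(i \in X) g i <= \sum_(i \in F) g i.
  rewrite -lee_fin -!fsumEFin //; apply: lee_fsum_nneg_subset => //.
    by move=> i; rewrite !inE; apply: sF.
  by move=> i _; rewrite lee_fin.
rewrite lee_fin in hle.
rewrite ler0_norm ?subr_le0 //; lra.
Qed.

Lemma esum_has_sum (g : I -> R) (v : C) : (forall i, 0 <= g i) ->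
  has_sum (fun i => (g i)%:C) v ->
  \esum_(i in [set: I]) (g i)%:E = (complex.Re v)%:E.
Proof.
move=> g0 hv; apply/eqP; rewrite eq_le; apply/andP; split.
  apply: ge_ereal_sup => _ [X [finX _] <-]; rewrite fsumEFin // lee_fin.
  apply/ler_addgt0Pr => eps e0.
  have [F0 [f0 H0]] := hv _ e0.
  have fU : finite_set (X `|` F0) by rewrite finite_setU; split.
  have := H0 _ fU (@subsetUr _ _ _).
  rewrite fsum_realC // => h.
  have h1 := Re_le_normc ((\sum_(i \in X `|` F0) g i)%:C - v).
  rewrite ReD ReN Re_real in h1.
  have hXF : \sum_(i \in X) g i <= \sum_(i \in X `|` F0) g i.
    rewrite -lee_fin -!fsumEFin //; apply: lee_fsum_nneg_subset => //.
      by move=> i; rewrite !inE => ?; left.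
    by move=> i _; rewrite lee_fin.
  rewrite /cabs in h; lra.
rewrite leNgt; apply/negP => hlt.
have [r [hr1 hr2]] : exists r : R, (r%:E < (complex.Re v)%:E)%E /\
    (\esum_(i in [set: I]) (g i)%:E <= r%:E)%E.
  have G0 : (0 <= \esum_(i in [set: I]) (g i)%:E)%E by apply: esum_ge0 => i _; rewrite lee_fin.
  move: hlt G0; case E: (\esum_(i in [set: I]) (g i)%:E) => [s| |] //.
  by move=> hs _; exists s; split.
rewrite lte_fin in hr1.
have e0 : 0 < complex.Re v - r by rewrite subr_gt0.
have [F0 [f0 H0]] := hv _ e0.
have := H0 _ f0 (@subset_refl _ _).
rewrite fsum_realC // => h.
have h1 := Re_le_normc (v - (\sum_(i \in F0) g i)%:C).
rewrite ReD ReN Re_real in h1.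
rewrite /cabs -normcN opprB in h.
have : ((\sum_(i \in F0) g i)%:E <= r%:E)%E.
  apply: le_trans hr2; rewrite -fsumEFin //; apply: esum_ge; exists F0 => //.
rewrite lee_fin; lra.
Qed.

End HS.

Set Implicit Arguments.
Unset Strict Implicit.
Unset Printing Implicit Defensive.
Local Open Scope classical_set_scope.
Local Open Scope ring_scope.
Local Open Scope complex_scope.

Section Fam.
Variable R : realType.
Local Notation C := R[i].
Variable V : lmodType C.
Variable inner : V -> V -> C.
Hypothesis Hip : is_inner_product inner.
Variable I : choiceType.
Variable e : I -> V.
Local Notation nn := (nn inner).

Lemma nnDZ x y (c : C) : nn (x + c *: y) = nn x + q c * nn y + 2 * complex.Re (conjc c * inner x y).
Proof. by rewrite (nnD Hip) (nnZ Hip) (ipZr Hip). Qed.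

Lemma polar x y : inner x y = 4^-1 * ((nn (x + y))%:C - (nn (x + (-1) *: y))%:C
   + 'i * (nn (x + 'i *: y))%:C - 'i * (nn (x + (- 'i) *: y))%:C).
Proof.
rewrite !nnDZ (nnD Hip).
have q1 : q (-1 : C) = 1 by rewrite /= qE; ring.
have qi : q ('i : C) = 1 by rewrite qE; ring.
have qmi : q (- 'i : C) = 1 by rewrite /= qE; ring.
rewrite q1 qi qmi.
case: (inner x y) => a b /=.
have h4 : (4^-1 : C) = (4^-1 : R)%:C by rewrite fmorphV rmorph_nat.
rewrite h4; move: (nn x) (nn y) => u v.
rewrite -!complexr0; simpc.
apply/eqP; rewrite eq_complex /=; apply/andP; split; apply/eqP; lra.
Qed.

End Fam.

Section Fam2.
Variable R : realType.
Local Notation C := R[i].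
Variable V : lmodType C.
Variable inner : V -> V -> C.
Hypothesis Hip : is_inner_product inner.
Variable I : choiceType.
Local Notation nn := (nn inner).

Lemma fin_esum (g : I -> R) (M : R) : (forall i, 0 <= g i) ->
  (\esum_(i in [set: I]) (g i)%:E <= M%:E)%E ->
  exists t, \esum_(i in [set: I]) (g i)%:E = t%:E.
Proof.
move=> g0 hM.
have G0 : (0 <= \esum_(i in [set: I]) (g i)%:E)%E by apply: esum_ge0 => i _; rewrite lee_fin.
move: hM G0; case: (\esum_(i in [set: I]) (g i)%:E) => [s| |] //; by exists s.
Qed.

Lemma ex_sum_nn (X Y : I -> V) (a b : R) (c : C) : q c = 1 ->
  \esum_(i in [set: I]) (nn (X i))%:E = a%:E ->
  \esum_(i in [set: I]) (nn (Y i))%:E = b%:E ->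
  exists t : R, has_sum (fun i => (nn (X i + c *: Y i))%:C) t%:C.
Proof.
move=> qc ha hb.
have [t ht] : exists t, \esum_(i in [set: I]) (nn (X i + c *: Y i))%:E = t%:E.
  apply: (@fin_esum _ (a + a + b + b)); first by move=> i; exact: nn_ge0.
  apply: (@le_trans _ _ (\esum_(i in [set: I]) ((nn (X i))%:E + (nn (X i))%:E
                + (nn (Y i))%:E + (nn (Y i))%:E))%E).
    apply: le_esum => i _; rewrite -!EFinD lee_fin.
    have := nnDle Hip (X i) (c *: Y i); rewrite (nnZ Hip) qc mul1r; lra.
  rewrite !esumD ?ha ?hb.
  all: try (by move=> i _; rewrite -?EFinD lee_fin ?addr_ge0 ?nn_ge0).
  by rewrite -!EFinD.
exists t; apply: has_sum_esum ht => i; exact: nn_ge0.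
Qed.

Lemma ex_sum_ip (X Y : I -> V) (a b : R) :
  \esum_(i in [set: I]) (nn (X i))%:E = a%:E ->
  \esum_(i in [set: I]) (nn (Y i))%:E = b%:E ->
  exists s, has_sum (fun i => inner (X i) (Y i)) s.
Proof.
move=> ha hb.
have q1 : q (1 : C) = 1 by rewrite qE; ring.
have qN1 : q (-1 : C) = 1 by rewrite /= qE; ring.
have qi : q ('i : C) = 1 by rewrite qE; ring.
have qmi : q (- 'i : C) = 1 by rewrite /= qE; ring.
have [t1 h1] := ex_sum_nn qN1 ha hb.
have [t2 h2] := ex_sum_nn q1 ha hb.
have [t3 h3] := ex_sum_nn qi ha hb.
have [t4 h4] := ex_sum_nn qmi ha hb.
have H := has_sumZ (4^-1) (has_sumD (has_sumD (has_sumD h2 (has_sumN h1))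
   (has_sumZ ('i) h3)) (has_sumN (has_sumZ ('i) h4))).
eexists; apply: has_sum_ext H => i /=; by rewrite (polar Hip) scale1r.
Qed.

Lemma has_sum_bilin (a b c d : C) (P Q P' Q' : I -> V) v1 v2 v3 v4 :
  has_sum (fun i => inner (P i) (P' i)) v1 -> has_sum (fun i => inner (P i) (Q' i)) v2 ->
  has_sum (fun i => inner (Q i) (P' i)) v3 -> has_sum (fun i => inner (Q i) (Q' i)) v4 ->
  has_sum (fun i => inner (a *: P i + b *: Q i) (c *: P' i + d *: Q' i))
    (a * conjc c * v1 + a * conjc d * v2 + b * conjc c * v3 + b * conjc d * v4).
Proof.
move=> h1 h2 h3 h4.
have H := has_sumD (has_sumD (has_sumD (has_sumZ (a * conjc c) h1)
   (has_sumZ (a * conjc d) h2)) (has_sumZ (b * conjc c) h3)) (has_sumZ (b * conjc d) h4).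
apply: has_sum_ext H => i /=.
rewrite !(ipDl Hip) !(ipDr Hip) !(ipZl Hip) !(ipZr Hip); ring.
Qed.

Lemma trace_sum (e : I -> V) T : (exists s, has_sum (fun i => inner (T (e i)) (e i)) s) ->
  has_sum (fun i => inner (T (e i)) (e i)) (trace inner e T).
Proof. by move=> h; exact: (xgetPex 0 h). Qed.

End Fam2.

Set Implicit Arguments.
Unset Strict Implicit.
Unset Printing Implicit Defensive.
Local Open Scope classical_set_scope.
Local Open Scope ring_scope.
Local Open Scope complex_scope.

Section Main.
Variable R : realType.
Local Notation C := R[i].
Variable V : lmodType C.
Variable inner : V -> V -> C.
Hypothesis Hip : is_inner_product inner.
Hypothesis Hc : hcomplete inner.
Variable I : choiceType.
Variable e : I -> V.
Hypothesis Hb : is_orthonormal_basis inner e.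
Variables B Bs D Ds : V -> V.
Hypothesis hB : (hs_sum inner e B < +oo)%E.
Hypothesis hD : (hs_sum inner e D < +oo)%E.
Hypothesis aB : is_adjoint inner B Bs.
Hypothesis aD : is_adjoint inner D Ds.
Local Notation nn := (nn inner).

Definition nB := fine (hs_sum inner e B).
Definition nD := fine (hs_sum inner e D).

Lemma hs_fin T : (hs_sum inner e T < +oo)%E -> hs_sum inner e T = (fine (hs_sum inner e T))%:E.
Proof.
move=> h; rewrite fineK //; rewrite ge0_fin_numE //; exact: hs_sum_ge0.
Qed.

Lemma EB : \esum_(i in [set: I]) (nn (B (e i)))%:E = nB%:E.
Proof. by rewrite -(hs_sumE Hip) -hs_fin. Qed.
Lemma ED : \esum_(i in [set: I]) (nn (D (e i)))%:E = nD%:E.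
Proof. by rewrite -(hs_sumE Hip) -hs_fin. Qed.
Lemma EBs : \esum_(i in [set: I]) (nn (Bs (e i)))%:E = nB%:E.
Proof. by rewrite -(hs_sumE Hip) (hs_adj_eq Hip Hc Hb aB) -hs_fin. Qed.
Lemma EDs : \esum_(i in [set: I]) (nn (Ds (e i)))%:E = nD%:E.
Proof. by rewrite -(hs_sumE Hip) (hs_adj_eq Hip Hc Hb aD) -hs_fin. Qed.

Lemma sum_self (X : I -> V) t : \esum_(i in [set: I]) (nn (X i))%:E = t%:E ->
  has_sum (fun i => inner (X i) (X i)) t%:C.
Proof.
move=> h; apply: has_sum_ext (has_sum_esum _ h) => [i|i]; last exact: nn_ge0.
by rewrite (ipxx Hip).
Qed.

Lemma tr_adj (T1 T1s T2 : V -> V) a b : is_adjoint inner T1 T1s ->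
  \esum_(i in [set: I]) (nn (T2 (e i)))%:E = a%:E ->
  \esum_(i in [set: I]) (nn (T1s (e i)))%:E = b%:E ->
  has_sum (fun i => inner (T2 (e i)) (T1s (e i))) (trace inner e (T1 \o T2)).
Proof.
move=> h ha hb.
have [s hs] := ex_sum_ip Hip ha hb.
have ex : exists s, has_sum (fun i => inner ((T1 \o T2) (e i)) (e i)) s.
  by exists s; apply: has_sum_ext hs => i /=; rewrite h.
apply: has_sum_ext (trace_sum ex) => i /=; by rewrite h.
Qed.

Lemma sumJ (X Y : I -> V) s : has_sum (fun i => inner (X i) (Y i)) s ->
  has_sum (fun i => inner (Y i) (X i)) (conjc s).
Proof. by move/has_sumJ; apply: has_sum_ext => i; rewrite -(ipC Hip). Qed.

Definition t1 := trace inner e (B \o B).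
Definition t2 := trace inner e (D \o D).
Definition t3 := trace inner e (B \o D).
Definition t3' := trace inner e (D \o B).
Definition t4 := trace inner e (B \o Ds).

Lemma ht1 : has_sum (fun i => inner (B (e i)) (Bs (e i))) t1.
Proof. exact: tr_adj aB EB EBs. Qed.
Lemma ht2 : has_sum (fun i => inner (D (e i)) (Ds (e i))) t2.
Proof. exact: tr_adj aD ED EDs. Qed.
Lemma ht3 : has_sum (fun i => inner (D (e i)) (Bs (e i))) t3.
Proof. exact: tr_adj aB ED EBs. Qed.
Lemma ht3' : has_sum (fun i => inner (B (e i)) (Ds (e i))) t3'.
Proof. exact: tr_adj aD EB EDs. Qed.
Lemma ht4 : has_sum (fun i => inner (Ds (e i)) (Bs (e i))) t4.
Proof. exact: tr_adj aB EDs EBs. Qed.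

Lemma cyc_aux (al : C) :
  complex.Re (1 * conjc 1 * nB%:C + 1 * conjc al * t3' + al * conjc 1 * conjc t3'
              + al * conjc al * nD%:C) =
  complex.Re (1 * conjc 1 * nB%:C + 1 * conjc (conjc al) * conjc t3 + conjc al * conjc 1 * t3
              + conjc al * conjc (conjc al) * nD%:C).
Proof.
pose T x := 1 *: B x + al *: Ds x.
pose Ts x := 1 *: Bs x + conjc al *: D x.
have aT : is_adjoint inner T Ts.
  move=> x y; rewrite /T /Ts (ipDl Hip) !(ipZl Hip) (ipDr Hip) !(ipZr Hip) aB.
  by rewrite (adj_sym Hip aD) conjcK rmorph1.
have h1 := has_sum_bilin Hip 1 al 1 al (sum_self EB) ht3' (sumJ ht3') (sum_self EDs).
have h2 := has_sum_bilin Hip 1 (conjc al) 1 (conjc al) (sum_self EBs) (sumJ ht3) ht3 (sum_self ED).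
have e1 := esum_has_sum (g := fun i => nn (T (e i))) (fun i => nn_ge0 Hip _)
   (has_sum_ext (fun i => ipxx Hip _) h1).
have e2 := esum_has_sum (g := fun i => nn (Ts (e i))) (fun i => nn_ge0 Hip _)
   (has_sum_ext (fun i => ipxx Hip _) h2).
have := hs_adj_eq Hip Hc Hb aT; rewrite !(hs_sumE Hip) e1 e2.
by case.
Qed.

Lemma t3E : t3' = t3.
Proof.
have h1 := cyc_aux 1; have h2 := cyc_aux 'i.
move: h1 h2; rewrite /=.
case: t3 => a b; case: t3' => a' b' /=.
move=> h1 h2; congr (_ +i* _); lra.
Qed.

Lemma subr_ge0_of (a b : R) : a <= b -> 0 <= b - a.
Proof. by rewrite subr_ge0. Qed.

Lemma conjcM (a b : C) : conjc (a * b) = conjc a * conjc b.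
Proof. exact: rmorphM. Qed.

Lemma q_cexpi (th : R) : q (cexpi th) = 1.
Proof. by rewrite /cexpi qE cos2Dsin2. Qed.

Lemma cabs_cexpi (th : R) : cabs (cexpi th) = 1.
Proof. by rewrite /cabs normc_qE q_cexpi sqrtr1. Qed.

Lemma ReMJ (a : C) (r : R) : complex.Re (a * conjc a * r%:C) = q a * r.
Proof. by rewrite mulcJ -rmorphM. Qed.

Lemma Re_le_cabs3 (a b c : C) : complex.Re (a * b * c) <= cabs a * cabs b * cabs c.
Proof. by rewrite -!cabsM; apply: Re_le_normc. Qed.

Lemma half_conj : (2^-1 : C) * conjc (2^-1) = (4^-1 : R)%:C.
Proof.
have h2 : (2^-1 : C) = (2^-1 : R)%:C by rewrite fmorphV rmorph_nat.
rewrite h2 conjc_real -rmorphM; congr (_%:C).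
by rewrite -invfM; congr (_^-1); rewrite -natrM.
Qed.

Definition Kb := 2^-1 * (Num.max (cabs t1) (cabs t2) + cabs t3
            + Num.max (hs_norm inner e B ^+ 2) (hs_norm inner e D ^+ 2) + cabs t4).

Lemma hs_normB : hs_norm inner e B ^+ 2 = nB.
Proof. by rewrite /hs_norm sqr_sqrtr // fine_ge0 // hs_sum_ge0. Qed.
Lemma hs_normD : hs_norm inner e D ^+ 2 = nD.
Proof. by rewrite /hs_norm sqr_sqrtr // fine_ge0 // hs_sum_ge0. Qed.

Lemma main_bound (l1 l2 : C) (th : R) : cabs l1 ^+ 2 + cabs l2 ^+ 2 <= 1 ->
  hs_norm inner e (re_op
           (fun x => cexpi th *: (l1 *: B x + l2 *: D x))
           (fun x => conjc (cexpi th) *: (conjc l1 *: Bs x + conjc l2 *: Ds x))) ^+ 2 <= Kb.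
Proof.
move=> hl; set ep := cexpi th.
pose S x := (ep * l1) *: B x + (ep * l2) *: D x.
pose Ss x := (conjc ep * conjc l1) *: Bs x + (conjc ep * conjc l2) *: Ds x.
have -> : (fun x => ep *: (l1 *: B x + l2 *: D x)) = S.
  by apply: boolp.funext => x; rewrite /S scalerDr !scalerA.
have -> : (fun x => conjc ep *: (conjc l1 *: Bs x + conjc l2 *: Ds x)) = Ss.
  by apply: boolp.funext => x; rewrite /Ss scalerDr !scalerA.
have aS : is_adjoint inner S Ss.
  move=> x y; rewrite /S /Ss (ipDl Hip) !(ipZl Hip) aB aD (ipDr Hip) !(ipZr Hip).
  by rewrite !conjcM !conjcK.
set x1 := cabs l1; set y1 := cabs l2.
have x0 : 0 <= x1 by apply: cabs_ge0.
have y0 : 0 <= y1 by apply: cabs_ge0.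
have ce : cabs ep = 1 by apply: cabs_cexpi.
have cJ (z : C) : cabs (conjc z) = cabs z by apply: cabsJ.
have v4 := has_sum_bilin Hip (conjc ep * conjc l1) (conjc ep * conjc l2)
   (conjc ep * conjc l1) (conjc ep * conjc l2) (sum_self EBs) (sumJ ht4) ht4 (sum_self EDs).
move: v4; set V4 := (X in has_sum _ X) => v4.
have RV4 : complex.Re V4 <= x1 ^+ 2 * nB + y1 ^+ 2 * nD + 2 * (x1 * y1 * cabs t4).
  rewrite /V4 !ReD !ReMJ !qM !qJ q_cexpi !mul1r.
  have h2 := Re_le_cabs3 (conjc ep * conjc l1) (conjc (conjc ep * conjc l2)) (conjc t4).
  have h3 := Re_le_cabs3 (conjc ep * conjc l2) (conjc (conjc ep * conjc l1)) t4.
  rewrite !cJ !cabsM !cJ ce !mul1r in h2 h3.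
  rewrite -/x1 -/y1 in h2 h3.
  have -> : q l1 = x1 ^+ 2 by [].
  have -> : q l2 = y1 ^+ 2 by [].
  lra.
have v2 := has_sum_bilin Hip (ep * l1) (ep * l2) (conjc ep * conjc l1) (conjc ep * conjc l2)
   ht1 ht3' ht3 ht2.
move: v2; set V2 := (X in has_sum _ X) => v2.
have RV2 : complex.Re V2 <= x1 ^+ 2 * cabs t1 + y1 ^+ 2 * cabs t2 + 2 * (x1 * y1 * cabs t3).
  rewrite /V2 t3E !ReD.
  have h1 := Re_le_cabs3 (ep * l1) (conjc (conjc ep * conjc l1)) t1.
  have h2 := Re_le_cabs3 (ep * l1) (conjc (conjc ep * conjc l2)) t3.
  have h3 := Re_le_cabs3 (ep * l2) (conjc (conjc ep * conjc l1)) t3.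
  have h4 := Re_le_cabs3 (ep * l2) (conjc (conjc ep * conjc l2)) t2.
  rewrite !cJ !cabsM !cJ ce !mul1r -/x1 -/y1 in h1 h2 h3 h4.
  nra.
clearbody V4 V2.
have hSS : \esum_(i in [set: I]) (nn (S (e i)))%:E = (complex.Re V4)%:E.
  rewrite -(hs_sumE Hip) -(hs_adj_eq Hip Hc Hb aS) (hs_sumE Hip).
  apply: esum_has_sum; first by move=> i; apply: nn_ge0.
  by apply: has_sum_ext v4 => i; rewrite (ipxx Hip).
have v1 := sum_self hSS.
have vA := has_sum_bilin Hip 2^-1 2^-1 2^-1 2^-1 v1 v2 (sumJ v2) v4.
move: vA; set VA := (X in has_sum _ X) => vA.
have hA : hs_sum inner e (re_op S Ss) = (complex.Re VA)%:E.
  rewrite (hs_sumE Hip); apply: esum_has_sum; first by move=> i; apply: nn_ge0.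
  by apply: has_sum_ext vA => i; rewrite /re_op (ipxx Hip) -scalerDr.
have RVA : complex.Re VA = 4^-1 * (2 * complex.Re V4 + 2 * complex.Re V2).
  rewrite /VA half_conj !ReD !ReRM ReJ Re_real; ring.
have VA0 : 0 <= complex.Re VA by rewrite -lee_fin -hA hs_sum_ge0.
rewrite /hs_norm hA /= sqr_sqrtr // RVA /Kb hs_normB hs_normD.
have T10 := cabs_ge0 t1; have T20 := cabs_ge0 t2.
have T30 := cabs_ge0 t3; have T40 := cabs_ge0 t4.
have nB0 : 0 <= nB by rewrite /nB fine_ge0 // hs_sum_ge0.
have nD0 : 0 <= nD by rewrite /nD fine_ge0 // hs_sum_ge0.
have M1a : cabs t1 <= Num.max (cabs t1) (cabs t2) by rewrite le_max lexx.
have M1b : cabs t2 <= Num.max (cabs t1) (cabs t2) by rewrite le_max lexx orbT.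
have M2a : nB <= Num.max nB nD by rewrite le_max lexx.
have M2b : nD <= Num.max nB nD by rewrite le_max lexx orbT.
move: (Num.max (cabs t1) (cabs t2)) (Num.max nB nD) M1a M1b M2a M2b => M1 M2 M1a M1b M2a M2b.
have sx := sqr_ge0 x1; have sy := sqr_ge0 y1.
have hl' : x1 ^+ 2 + y1 ^+ 2 <= 1 := hl.
have xy : 2 * (x1 * y1) <= 1 by have := sqr_ge0 (x1 - y1); nra.
have M10 : 0 <= M1 by lra.
have M20 : 0 <= M2 by lra.
have p1 : x1 ^+ 2 * cabs t1 + y1 ^+ 2 * cabs t2 <= M1.
  have := mulr_ge0 sx (subr_ge0_of M1a); have := mulr_ge0 sy (subr_ge0_of M1b).
  have := mulr_ge0 M10 (subr_ge0_of hl'); nra.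
have p2 : x1 ^+ 2 * nB + y1 ^+ 2 * nD <= M2.
  have := mulr_ge0 sx (subr_ge0_of M2a); have := mulr_ge0 sy (subr_ge0_of M2b).
  have := mulr_ge0 M20 (subr_ge0_of hl'); nra.
have p3 : 2 * (x1 * y1 * cabs t3) <= cabs t3.
  have := mulr_ge0 T30 (subr_ge0_of xy); nra.
have p4 : 2 * (x1 * y1 * cabs t4) <= cabs t4.
  have := mulr_ge0 T40 (subr_ge0_of xy); nra.
lra.
Qed.

End Main.

Local Open Scope classical_set_scope.
Local Open Scope ring_scope.

Theorem theorem3p4 (R : realType) (V : lmodType R[i]) (inner : V -> V -> R[i])
  (I : choiceType) (e : I -> V) (B Bs C Cs : V -> V) :
  is_hilbert_space inner ->
  is_orthonormal_basis inner e ->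
  hilbert_schmidt inner e B -> hilbert_schmidt inner e C ->
  is_adjoint inner B Bs -> is_adjoint inner C Cs ->
  w2e inner e B Bs C Cs ^+ 2 <=
    2^-1 * (Num.max (cabs (trace inner e (B \o B))) (cabs (trace inner e (C \o C)))
            + cabs (trace inner e (B \o C))
            + Num.max (hs_norm inner e B ^+ 2) (hs_norm inner e C ^+ 2)
            + cabs (trace inner e (B \o Cs))).
Proof.
move=> [Hip Hc] Hb [_ hB] [_ hC] aB aC.
have -> : 2^-1 * (Num.max (cabs (trace inner e (B \o B))) (cabs (trace inner e (C \o C)))
            + cabs (trace inner e (B \o C))
            + Num.max (hs_norm inner e B ^+ 2) (hs_norm inner e C ^+ 2)
            + cabs (trace inner e (B \o Cs))) = Kb inner e B C Cs by [].
set K := Kb inner e B C Cs.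
set E := [set r : R | exists (l1 l2 : R[i]) (th : R),
     cabs l1 ^+ 2 + cabs l2 ^+ 2 <= 1 /\
     r = hs_norm inner e (re_op
           (fun x => cexpi th *: (l1 *: B x + l2 *: C x))
           (fun x => conjc (cexpi th) *: (conjc l1 *: Bs x + conjc l2 *: Cs x)))].
have hE r : E r -> 0 <= r /\ r ^+ 2 <= K.
  case=> l1 [l2 [th [hl ->]]]; split; first by rewrite /hs_norm sqrtr_ge0.
  exact: (main_bound Hip Hc Hb hB hC aB aC th hl).
have E0 : E (hs_norm inner e (re_op
           (fun x => cexpi 0 *: (0 *: B x + 0 *: C x))
           (fun x => conjc (cexpi 0) *: (conjc 0 *: Bs x + conjc 0 *: Cs x)))).
  exists 0, 0, 0; split => //.
  by rewrite /cabs Normc.normc0 expr0n /= addr0 ler01.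
set r0 := hs_norm _ _ _ in E0.
have [r00 r0K] := hE _ E0.
have K0 : 0 <= K by apply: le_trans r0K; rewrite sqr_ge0.
have ub : ubound E (Num.sqrt K).
  move=> r /hE [r0' rK]; rewrite -(ger0_norm r0') -sqrtr_sqr; exact: ler_wsqrtr.
have sK : w2e inner e B Bs C Cs <= Num.sqrt K.
  by apply: ge_sup => //; exists r0.
have s0 : r0 <= w2e inner e B Bs C Cs.
  by apply: (ub_le_sup (E:=E)); [exists (Num.sqrt K) | ].
have := sqr_sqrtr K0.
move: (Num.sqrt K) sK ub => k sK _ hk.
rewrite -hk; have ws : 0 <= w2e inner e B Bs C Cs by lra.
move: (w2e inner e B Bs C Cs) ws sK => w ws sK; nra.
Qed.
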